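(* For any $u\in S_n$ and double braid word $\beta$ with $u\le\beta$, the quiver $\widetilde Q_{u,\beta}$ is really full rank, i.e. the rows of its exchange matrix $(b_{c,d})_{c\in J,\ d\ \mathrm{mutable}}$ span $\mathbb Z^{k}$ over $\mathbb Z$, where $k$ is the number of mutable vertices.
   Context: Notation: $n\ge2$, $I=\{1,\dots,n-1\}$, $\pm I=I\sqcup(-I)$; permutations composed as functions, $s_i=(i\ i+1)$, Bruhat order $\le$, Demazure product $*$. Double braid word $\beta=(i_1,\dots,i_m)\in(\pm I)^m$; $s_i^+=s_i,s_i^-=\mathrm{id}$ if $i>0$, $s_i^+=\mathrm{id},s_i^-=s_{-i}$ if $i<0$; $u\le\beta$ means $u\le s^-_{i_m}*\dots*s^-_{i_1}*s^+_{i_1}*\dots*s^+_{i_m}$. $s_i\rhd u=s_iu$ if $s_iu<u$ else $u$; $u\lhd s_i=us_i$ if $us_i<u$ else $u$; identity acts trivially. $u_{(m)}=u$, $u_{(c-1)}=s^-_{i_c}\rhd u_{(c)}\lhd s^+_{i_c}$; $J=\{c:u_{(c)}=u_{(c-1)}\}$ (solid), others hollow. Graph $G_{u,\beta}$ in $\mathbb R^3$ ($(i,j,t)$): dots $(i,u_{(c)}(i),c)$; strands time $c-1\to c$: unchanged if $c$ solid; rows $j,j+1$ swapped if $c$ hollow with $i_c=j>0$; columns $i,i+1$ swapped if hollow with $i_c=-i$. Solid $c$ with $i_c=j>0$, dots $(i,j),(i',j+1)$ ($i<i'$): black $p$ on the strand through $(i,j)$, white $q$ on that through $(i',j+1)$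 at time $c-\frac12$, bridge $b_c=pq$; solid $c$ with $i_c=-i$, dots $(i,j),(i+1,j')$ ($j<j'$): white $p$ through $(i,j)$, black $q$ through $(i+1,j')$. Start $p$, end $q$. Vertices: bridge endpoints and strand ends at $t=0,m$; edges: bridges and strand pieces. Cyclic orders: counterclockwise at white, clockwise at black, in projection $(i,j,t)\mapsto(t,j)$. $\mathbf S$ thickened oriented surface, $\mathbb M$ the $n$ marked points from the time-$0$ ends, $\Lambda=H_1(\mathbf S,\mathbb M;\mathbb Z)$, $\Lambda^*=H_1(\mathbf S\setminus\mathbb M,\partial\mathbf S\setminus\mathbb M;\mathbb Z)$, intersection pairing $\langle\cdot,\cdot\rangle:\Lambda\otimes\Lambda^*\to\mathbb Z$. Relative cycles: monotone curves in $\Gamma(z)$ (strictly increasing coordinates, dot endpoints, no other dots), multicurves ordered componentwise. For $c\in J$, $\gamma^{c,c-1}$ joins the two dots on the strands of $b_c$; from $r$ to $r-1$: hollow $r$: continuous deformation keeping dots on the same side as their strand-mates; solid $r$ with $i_r=j>0$: with $D,D'$ the dots in rows $j,j+1$, delete the part strictly between $D,D'$ of each curve passing weakly above $D$ and weakly below $D'$; solid $r$ with $i_r=-i$: $D,D'$ in columns $i,i+1$, same for curves weakly right of $D$ and weakly left of $D'$. These sweep, with $b_c$, a disk $D_c$ whose boundary is graph edges plus $\gamma^{c,0}$; $c$ mutable iff $\gamma^{c,0}=\emptyset$, frozen otherwise. $C_c=\partial D_c\setminus\gamma^{c,0}\in\Lambda$, oriented with $b_c$ from start to end. $\widetilde Q_{u,\beta}$: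 vertices $J$, frozen vertices the frozen indices; exchange matrix $b_{c,d}=\langle C_c,C_d\rangle$ for $c\in J$, $d$ mutable (= #arrows $c\to d$ minus #arrows $d\to c$). *)

(* Defs.v *)
From HB Require Import structures.
From mathcomp Require Import all_boot all_order all_algebra all_fingroup.
Import GRing.Theory Num.Theory.

(* ---------- permutations of 'I_n (0-based; the letter i in I = {1..n-1}
   is the simple transposition swapping 0-based i-1 and i) ---------- *)
Definition sref (n i : nat) : {perm 'I_n} :=
  match (insub i.-1 : option 'I_n), (insub i : option 'I_n) with
  | Some a, Some b => tperm a b
  | _, _ => 1%g
  end.

(* composition as functions: pcomp u v = u o v *)
Definition pcomp n (u v : {perm 'I_n}) : {perm 'I_n} := (v * u)%g.

Definition plen n (w : {perm 'I_n}) : nat :=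
  #|[set p : 'I_n * 'I_n | (p.1 < p.2)%N && (w p.2 < w p.1)%N]|.

Definition bruhat_cover n : rel {perm 'I_n} := fun x y =>
  [exists a : 'I_n, exists b : 'I_n,
     [&& a != b, y == pcomp n x (tperm a b) & (plen n x < plen n y)%N]].
Definition bruhat_le n (x y : {perm 'I_n}) : bool := connect (bruhat_cover n) x y.
Definition bruhat_lt n (x y : {perm 'I_n}) : bool := bruhat_le n x y && (x != y).

Definition wf_word n (beta : seq int) : bool :=
  all (fun i : int => (i != 0%R) && (absz i < n)%N) beta.

Definition splus n (i : int) : {perm 'I_n} :=
  if (0 < i)%R then sref n (absz i) else 1%g.
Definition sminus n (i : int) : {perm 'I_n} :=
  if (i < 0)%R then sref n (absz i) else 1%g.

Definition dem n (x s : {perm 'I_n}) : {perm 'I_n} :=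
  if (plen n x < plen n (pcomp n x s))%N then pcomp n x s else x.
Definition demazure n (ws : seq {perm 'I_n}) : {perm 'I_n} := foldl (dem n) 1%g ws.

Definition delta n (beta : seq int) : {perm 'I_n} :=
  demazure n (rev (map (sminus n) beta) ++ map (splus n) beta).

Definition below_word n (u : {perm 'I_n}) (beta : seq int) : bool :=
  bruhat_le n u (delta n beta).

Definition lact n (s u : {perm 'I_n}) : {perm 'I_n} :=
  if bruhat_lt n (pcomp n s u) u then pcomp n s u else u.
Definition ract n (u s : {perm 'I_n}) : {perm 'I_n} :=
  if bruhat_lt n (pcomp n u s) u then pcomp n u s else u.
Definition ustep n (i : int) (w : {perm 'I_n}) : {perm 'I_n} :=
  ract n (lact n (sminus n i) w) (splus n i).

Definition uat n (u : {perm 'I_n}) (beta : seq int) (c : nat) : {perm 'I_n} :=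
  foldl (fun w i => ustep n i w) u (rev (drop c beta)).

(* the letter i_c (1-based) *)
Definition letter (beta : seq int) (c : nat) : int := nth 0%R beta c.-1.

Definition solid n (u : {perm 'I_n}) beta (c : nat) : bool :=
  uat n u beta c == uat n u beta c.-1.

Definition Jset n (u : {perm 'I_n}) beta : seq nat :=
  [seq c <- iota 1 (size beta) | solid n u beta c].

(* ---------- geometry of the dots ----------
   At time c the dot of index k : 'I_n lies in row k and column u_(c)(k).  Strands are followed backwards in time: the dot
   of index k at time c continues at time c-1 as the dot of index
   sigma_c(k). *)
Definition sigma n (u : {perm 'I_n}) beta (c : nat) : {perm 'I_n} :=
  if (~~ solid n u beta c) && (0 < letter beta c)%R
  then sref n (absz (letter beta c)) else 1%g.

(* strand through dot k at time c, named by its index at time 0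
   (= its time-0 end) *)
Fixpoint strand_at n (u : {perm 'I_n}) beta (c : nat) (k : 'I_n) : 'I_n :=
  match c with
  | 0 => k
  | c'.+1 => strand_at n u beta c' (sigma n u beta c'.+1 k)
  end.

(* the two dots (D, D') attached to the bridge b_c (c solid):
   i_c = j > 0 : the dots in rows j, j+1 (1-based);
   i_c = -i    : the dots in columns i, i+1 (1-based).
   p (start of b_c) is on the strand of D, q (end) on that of D'. *)
Definition bridge_dots n (u : {perm 'I_n}) beta (c : nat) : option ('I_n * 'I_n) :=
  let w := uat n u beta c in
  let i := letter beta c in
  if (0 < i)%R then
    match [pick k : 'I_n | val k == (absz i).-1], [pick k : 'I_n | val k == absz i] with
    | Some D, Some D' => Some (D, D')
    | _, _ => None
    end
  else
    match [pick k : 'I_n | val (w k) == (absz i).-1],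
          [pick k : 'I_n | val (w k) == absz i] with
    | Some D, Some D' => Some (D, D')
    | _, _ => None
    end.

(* ---------- monotone curves ----------
   A monotone curve in Gamma(z) is given up to isotopy by its start dot a,
   its end dot b (both coordinates strictly increasing from a to b) and the
   set S of dots strictly inside the rectangle spanned by a, b which lie
   above (north-west of) the curve. *)
Definition curve n := ('I_n * 'I_n * {set 'I_n})%type.

Definition inrect n (w : {perm 'I_n}) (a b k : 'I_n) : bool :=
  [&& (w a < w k)%N, (w k < w b)%N, (a < k)%N & (k < b)%N].

(* side of dot k w.r.t. the curve (w gives the columns):
   Some true = north-west side, Some false = south-east side,
   None = endpoint or not comparable *)
Definition side n (w : {perm 'I_n}) (cv : curve n) (k : 'I_n) : option bool :=
  let '(a, b, Sab) := cv in
  if (k == a) || (k == b) then None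
  else if inrect n w a b k then Some (k \in Sab)
  else if [&& (w a < w k)%N, (w k < w b)%N & (b < k)%N] then Some true
  else if [&& (w a < w k)%N, (w k < w b)%N & (k < a)%N] then Some false
  else if [&& (a < k)%N, (k < b)%N & (w k < w a)%N] then Some true
  else if [&& (a < k)%N, (k < b)%N & (w b < w k)%N] then Some false
  else None.

(* hollow step r -> r-1: continuous deformation; w = u_(r), w' = u_(r-1),
   s = strand map sigma_r *)
Definition hollow_curve n (w w' s : {perm 'I_n}) (cv : curve n) : curve n :=
  let '(a, b, Sab) := cv in
  (s a, s b,
   [set k | inrect n w' (s a) (s b) k && (side n w cv ((s^-1)%g k) == Some true)]).

(* solid step: delete the part strictly between D and D' of a curve passing
   weakly above D and weakly below D' (row case), resp. weakly right of D and
   weakly left of D' (column case). *)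
Definition solid_curve n (w : {perm 'I_n}) (rowcase : bool) (D D' : 'I_n)
    (cv : curve n) : seq (curve n) * nat :=
  let '(a, b, Sab) := cv in
  if ((D == a) || (side n w cv D == Some (~~ rowcase))) &&
     ((D' == b) || (side n w cv D' == Some rowcase)) then
    ((if a != D then [:: (a, D, [set k in Sab | inrect n w a D k])] else [::]) ++
     (if D' != b then [:: (D', b, [set k in Sab | inrect n w D' b k])] else [::]),
     1%N)
  else ([:: cv], 0%N).

Definition sweep_step n (u : {perm 'I_n}) beta (r : nat) (mc : seq (curve n)) :
    seq (curve n) * nat :=
  let w := uat n u beta r in
  if solid n u beta r then
    match bridge_dots n u beta r with
    | Some (D, D') =>
        let res := map (solid_curve n w (0 < letter beta r)%R D D') mc in
        (flatten (map fst res), sumn (map snd res))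
    | None => (mc, 0%N)
    end
  else (map (hollow_curve n w (uat n u beta r.-1) (sigma n u beta r)) mc, 0%N).

(* from time r down to time 0; also records the number of deletions
   (i.e. of bridges b_e swept) at each step e *)
Fixpoint sweep n (u : {perm 'I_n}) beta (r : nat) (mc : seq (curve n)) :
    seq (curve n) * (nat -> nat) :=
  match r with
  | 0 => (mc, fun _ => 0%N)
  | r'.+1 =>
      let (mc1, k) := sweep_step n u beta r'.+1 mc in
      let (fin, dels) := sweep n u beta r' mc1 in
      (fin, fun e => if e == r'.+1 then k else dels e)
  end.

(* the disk D_c: gamma^{c,c-1} joins D and D' at time c-1 *)
Definition disk n (u : {perm 'I_n}) beta (c : nat) : seq (curve n) * (nat -> nat) :=
  match bridge_dots n u beta c with
  | Some (D, D') => sweep n u beta c.-1 [:: (D, D', set0)]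
  | None => ([::], fun _ => 0%N)
  end.

Definition gamma0 n (u : {perm 'I_n}) beta (c : nat) : seq (curve n) :=
  (disk n u beta c).1.

Definition mutable_vertices n (u : {perm 'I_n}) beta : seq nat :=
  [seq d <- Jset n u beta | nilp (gamma0 n u beta d)].

(* ---------- 1-chains on G_{u,beta} ----------
   A 1-chain C_c is encoded by its coefficients on the bridges b_e (e in J);
   its coefficients on the strand pieces are then determined (each strand is
   a path, and C_c has boundary supported on time-0 ends and vanishes on the
   last pieces): see piece_in / piece_out. *)
Definition Cbridge n (u : {perm 'I_n}) beta (c : nat) (e : nat) : int :=
  ((nat_of_bool (e == c))%:Z - ((disk n u beta c).2 e)%:Z)%R.

Definition endsgn n (u : {perm 'I_n}) beta (s : 'I_n) (e : nat) : int :=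
  match bridge_dots n u beta e with
  | Some (D, D') =>
      ((nat_of_bool (strand_at n u beta e D' == s))%:Z
       - (nat_of_bool (strand_at n u beta e D == s))%:Z)%R
  | None => 0%R
  end.

(* coefficient of the strand piece of s ending at time e - 1/2 *)
Definition piece_in n (u : {perm 'I_n}) beta (x : nat -> int) (s : 'I_n) (e : nat) : int :=
  (- \sum_(e' <- Jset n u beta | (e <= e')%N) endsgn n u beta s e' * x e')%R.
(* coefficient of the strand piece of s starting at time e - 1/2 *)
Definition piece_out n (u : {perm 'I_n}) beta (x : nat -> int) (s : 'I_n) (e : nat) : int :=
  (- \sum_(e' <- Jset n u beta | (e < e')%N) endsgn n u beta s e' * x e')%R.

(* outgoing flows of the chain x at the vertex p_e (atq = false) or q_e
   (atq = true), listed in the counterclockwise cyclic order of the ribbon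
   structure, together with a flag telling whether the edge is oriented out
   of the vertex. *)
Definition vflows n (u : {perm 'I_n}) beta (x : nat -> int) (e : nat) (atq : bool) :
    seq (int * bool) :=
  match bridge_dots n u beta e with
  | Some (D, D') =>
      let s := strand_at n u beta e (if atq then D' else D) in
      let fout := (piece_out n u beta x s e, true) in
      let fin := ((- piece_in n u beta x s e)%R, false) in
      let fbr := ((if atq then - x e else x e)%R, ~~ atq) in
      if (0 < letter beta e)%R then [:: fout; fin; fbr] else [:: fout; fbr; fin]
  | None => [::]
  end.

(* local intersection number at a vertex (y pushed to the left of its edges):
   sum_k y_k * (sum_{i<k} x_i + [h_k outgoing] x_k) *)
Fixpoint locint (acc : int) (xs : seq (int * bool)) (ys : seq int) : int :=
  match xs, ys with
  | (xk, dk) :: xs', yk :: ys' =>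
      (yk * (acc + (if dk then xk else 0)) + locint (acc + xk) xs' ys')%R
  | _, _ => 0%R
  end.

Definition pairing n (u : {perm 'I_n}) beta (x y : nat -> int) : int :=
  (\sum_(e <- Jset n u beta)
     (locint 0 (vflows n u beta x e false) (map fst (vflows n u beta y e false))
      + locint 0 (vflows n u beta x e true) (map fst (vflows n u beta y e true))))%R.

Definition exchange n (u : {perm 'I_n}) beta (c d : nat) : int :=
  pairing n u beta (Cbridge n u beta c) (Cbridge n u beta d).

(* Main.v *)
Require Import Defs.
From mathcomp Require Import all_boot all_order all_algebra all_fingroup.
From mathcomp Require Import ring zify.
Import GRing.Theory Num.Theory.
Set Implicit Arguments. Unset Strict Implicit.
Local Open Scope ring_scope.

Lemma J_sorted n (u : {perm 'I_n}) beta : sorted ltn (Jset n u beta).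
Proof. exact/sorted_filter/iota_ltn_sorted/ltn_trans. Qed.

Lemma J_uniq n (u : {perm 'I_n}) beta : uniq (Jset n u beta).
Proof. exact/filter_uniq/iota_uniq. Qed.

Lemma J_nth_lt n (u : {perm 'I_n}) beta (i j : nat) :
  (i < size (Jset n u beta))%N -> (j < size (Jset n u beta))%N ->
  (nth 0%N (Jset n u beta) i < nth 0%N (Jset n u beta) j)%N = (i < j)%N.
Proof.
move=> hi hj; have hs := J_sorted u beta.
have mono := sorted_ltn_nth ltn_trans 0%N hs.
case: (ltngtP i j) => h.
- by apply: mono.
- by apply/negbTE; rewrite -leqNgt ltnW //; apply: mono.
- by rewrite h ltnn.
Qed.

Lemma J_nth_le n (u : {perm 'I_n}) beta (i j : nat) :
  (i < size (Jset n u beta))%N -> (j < size (Jset n u beta))%N ->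
  (nth 0%N (Jset n u beta) i <= nth 0%N (Jset n u beta) j)%N = (i <= j)%N.
Proof. by move=> hi hj; rewrite leqNgt J_nth_lt // -leqNgt. Qed.

Lemma J_mem n (u : {perm 'I_n}) beta c :
  c \in Jset n u beta -> (1 <= c <= size beta)%N.
Proof.
rewrite mem_filter mem_iota => /andP[_ /andP[h1 h2]].
by rewrite h1 /= -ltnS -(addn1 (size beta)) addnC.
Qed.

Lemma sweep_dels0 n (u : {perm 'I_n}) beta r mc e :
  (r < e)%N -> (sweep n u beta r mc).2 e = 0%N.
Proof.
elim: r mc => [//|r IH] mc /= he.
case: (sweep_step n u beta r.+1 mc) => mc1 k.
have := IH mc1 (ltnW he).
case: (sweep n u beta r mc1) => fin dels /= ->.
by rewrite (gtn_eqF he).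
Qed.

Lemma disk_dels0 n (u : {perm 'I_n}) beta c e :
  (1 <= c)%N -> (c <= e)%N -> (disk n u beta c).2 e = 0%N.
Proof.
move=> h1 h2; rewrite /disk.
case: (bridge_dots n u beta c) => [[D D']|//].
by apply: sweep_dels0; case: c h1 h2 => [//|c] _ /=.
Qed.

Lemma strand_at_inj n (u : {perm 'I_n}) beta c : injective (strand_at n u beta c).
Proof.
elim: c => [//|c IH] x y /= /IH; exact: perm_inj.
Qed.

Lemma bd_some n (u : {perm 'I_n}) beta c :
  wf_word n beta -> c \in Jset n u beta ->
  exists D D', bridge_dots n u beta c = Some (D, D') /\ D != D'.
Proof.
move=> wf cJ; have /andP[c1 c2] := J_mem cJ.
have : letter beta c \in beta by rewrite /letter mem_nth // prednK.
move/(allP wf) => /andP[i0 ilt].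
have ai : (0 < absz (letter beta c))%N by rewrite absz_gt0.
have ai1 : ((absz (letter beta c)).-1 < n)%N by rewrite prednK // ltnW.
rewrite /bridge_dots; case: ifP => _.
- case: pickP => [D /eqP hD|/(_ (Ordinal ai1)) /=]; last by rewrite eqxx.
  case: pickP => [D' /eqP hD'|/(_ (Ordinal ilt)) /=]; last by rewrite eqxx.
  exists D, D'; split => //; apply/negP => /eqP e.
  by move: hD; rewrite e hD'; lia.
- set w := uat n u beta c.
  case: pickP => [D /eqP hD|/(_ ((w^-1)%g (Ordinal ai1))) /=]; last by rewrite permKV eqxx.
  case: pickP => [D' /eqP hD'|/(_ ((w^-1)%g (Ordinal ilt))) /=]; last by rewrite permKV eqxx.
  exists D, D'; split => //; apply/negP => /eqP e.
  by move: hD; rewrite e hD'; lia.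
Qed.

Definition jn n (u : {perm 'I_n}) beta (i : nat) : nat := nth 0%N (Jset n u beta) i.

Lemma big_J n (u : {perm 'I_n}) beta (P : pred nat) (F : nat -> int) :
  \sum_(e <- Jset n u beta | P e) F e =
  \sum_(i < size (Jset n u beta) | P (jn u beta i)) F (jn u beta i).
Proof. by rewrite (big_nth 0%N) big_mkord. Qed.

Lemma piece_out_ord n (u : {perm 'I_n}) beta x s (i : 'I_(size (Jset n u beta))) :
  piece_out n u beta x s (jn u beta i) =
  - \sum_(j < size (Jset n u beta) | (i < j)%N) endsgn n u beta s (jn u beta j) * x (jn u beta j).
Proof.
rewrite /piece_out big_J; congr (- _); apply: eq_bigl => j.
by rewrite /jn J_nth_lt.
Qed.

Lemma piece_in_ord n (u : {perm 'I_n}) beta x s (i : 'I_(size (Jset n u beta))) :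
  piece_in n u beta x s (jn u beta i) =
  piece_out n u beta x s (jn u beta i) - endsgn n u beta s (jn u beta i) * x (jn u beta i).
Proof.
rewrite piece_out_ord /piece_in big_J.
rewrite (eq_bigl (fun j : 'I_(size (Jset n u beta)) => (i <= j)%N)); last first.
  by move=> j; rewrite /jn J_nth_le.
rewrite (bigD1 i) //= opprD addrC; congr (- _ - _).
by apply: eq_bigl => j; rewrite ltn_neqAle andbC eq_sym.
Qed.

Lemma endsgn_self n (u : {perm 'I_n}) beta e D D' :
  bridge_dots n u beta e = Some (D, D') -> D != D' ->
  endsgn n u beta (strand_at n u beta e D) e = -1 /\
  endsgn n u beta (strand_at n u beta e D') e = 1.
Proof.
move=> hb hD; rewrite /endsgn hb !eqxx.
have ne : (strand_at n u beta e D' == strand_at n u beta e D) = false.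
  by apply/negbTE; apply: contra hD => /eqP /strand_at_inj ->.
by rewrite ne eq_sym ne.
Qed.

Definition VT n (u : {perm 'I_n}) beta (x y : nat -> int) e :=
  locint 0 (vflows n u beta x e false) (map fst (vflows n u beta y e false))
  + locint 0 (vflows n u beta x e true) (map fst (vflows n u beta y e true)).

Lemma VT_formula n (u : {perm 'I_n}) beta (x y : nat -> int) (i : 'I_(size (Jset n u beta))) D D' :
  bridge_dots n u beta (jn u beta i) = Some (D, D') -> D != D' ->
  let e := jn u beta i in
  let s1 := strand_at n u beta e D in
  let s2 := strand_at n u beta e D' in
  VT u beta x y e =
  (if (0 < letter beta e) then y e * (piece_out n u beta x s2 e - piece_out n u beta x s1 e)
   else x e * (piece_out n u beta y s2 e - piece_out n u beta y s1 e)) - x e * y e.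
Proof.
move=> hb hD e s1 s2.
have [h1 h2] := endsgn_self hb hD.
rewrite /VT /vflows hb !piece_in_ord -/e -/s1 -/s2 h1 h2.
case: ifP => _ /=; ring.
Qed.

Definition Kf n (u : {perm 'I_n}) beta (e e' : nat) : int :=
  match bridge_dots n u beta e with
  | Some (D, D') => endsgn n u beta (strand_at n u beta e D') e'
                    - endsgn n u beta (strand_at n u beta e D) e'
  | None => 0
  end.


Definition Kt n (u : {perm 'I_n}) beta (i j : nat) : int :=
  if (i < j)%N then Kf u beta (jn u beta i) (jn u beta j) else 0.

Definition Rw n (u : {perm 'I_n}) beta (i : nat) : bool := (0 < letter beta (jn u beta i)).

Definition Am' n (u : {perm 'I_n}) beta : 'M[int]_(size (Jset n u beta)) :=
  \matrix_(i, j) (if Rw u beta i then 0 else Kt u beta i j).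
Definition Bm' n (u : {perm 'I_n}) beta : 'M[int]_(size (Jset n u beta)) :=
  \matrix_(i, j) (if Rw u beta j then Kt u beta j i else 0).
Definition Qm n (u : {perm 'I_n}) beta : 'M[int]_(size (Jset n u beta)) :=
  1%:M + Am' u beta + Bm' u beta.

Lemma po_diff n (u : {perm 'I_n}) beta (x : nat -> int) (i : 'I_(size (Jset n u beta))) D D' :
  bridge_dots n u beta (jn u beta i) = Some (D, D') ->
  piece_out n u beta x (strand_at n u beta (jn u beta i) D') (jn u beta i)
  - piece_out n u beta x (strand_at n u beta (jn u beta i) D) (jn u beta i) =
  - \sum_(j < size (Jset n u beta) | (i < j)%N) Kf u beta (jn u beta i) (jn u beta j) * x (jn u beta j).
Proof.
move=> hb; rewrite !piece_out_ord opprK addrC -opprB -sumrB; congr (- _).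
by apply: eq_bigr => j _; rewrite /Kf hb mulrBl.
Qed.

Lemma pairing_formula n (u : {perm 'I_n}) beta (x y : nat -> int) :
  wf_word n beta ->
  pairing n u beta x y =
  - \sum_(i < size (Jset n u beta)) \sum_(j < size (Jset n u beta))
      x (jn u beta i) * Qm u beta i j * y (jn u beta j).
Proof.
move=> wf.
set k := size (Jset n u beta).
have -> : pairing n u beta x y = \sum_(i < k) VT u beta x y (jn u beta i).
  by rewrite /pairing (big_J u beta predT).
have split : forall i : 'I_k, \sum_(j < k) x (jn u beta i) * Qm u beta i j * y (jn u beta j) =
    x (jn u beta i) * y (jn u beta i)
    + \sum_(j < k) x (jn u beta i) * Am' u beta i j * y (jn u beta j)
    + \sum_(j < k) x (jn u beta i) * Bm' u beta i j * y (jn u beta j).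
  move=> i.
  rewrite (eq_bigr (fun j : 'I_k => x (jn u beta i) * (1%:M : 'M[int]_k) i j * y (jn u beta j)
     + x (jn u beta i) * Am' u beta i j * y (jn u beta j)
     + x (jn u beta i) * Bm' u beta i j * y (jn u beta j))); last first.
    by move=> j _; rewrite /Qm !mxE; ring.
  rewrite !big_split /=; congr (_ + _ + _).
  rewrite (bigD1 i) //= big1 ?addr0 => [|j hj]; rewrite !mxE ?eqxx ?mulr1 //.
  by rewrite eq_sym (negbTE hj) mulr0 mul0r.
have hx : \sum_(i < k) \sum_(j < k) x (jn u beta i) * Bm' u beta i j * y (jn u beta j) =
  \sum_(i < k) \sum_(j < k) x (jn u beta j) * Bm' u beta j i * y (jn u beta i).
  by rewrite exchange_big.
rewrite (eq_bigr _ (fun i _ => split i)) !big_split /= hx.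
rewrite -!big_split /= -sumrN; apply: eq_bigr => i _.
have cJ : jn u beta i \in Jset n u beta by rewrite /jn mem_nth.
have [D [D' [hb hD]]] := bd_some wf cJ.
have hv := @VT_formula _ u beta x y i D D' hb hD; rewrite /VT in hv; rewrite hv !po_diff //.
have hA : \sum_(j < k) x (jn u beta i) * Am' u beta i j * y (jn u beta j) =
   if Rw u beta i then 0 else x (jn u beta i) *
      \sum_(j < k | (i < j)%N) Kf u beta (jn u beta i) (jn u beta j) * y (jn u beta j).
  rewrite /Rw; case: ifP => hr.
    by apply: big1 => j _; rewrite mxE /Rw hr mulr0 mul0r.
  rewrite mulr_sumr [in RHS]big_mkcond /=.
  apply: eq_bigr => j _.
  by rewrite mxE /Rw hr /Kt; case: ifP => _; [ring|rewrite mulr0 mul0r].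
have hB : \sum_(j < k) x (jn u beta j) * Bm' u beta j i * y (jn u beta i) =
   if Rw u beta i then y (jn u beta i) *
      \sum_(j < k | (i < j)%N) Kf u beta (jn u beta i) (jn u beta j) * x (jn u beta j) else 0.
  rewrite /Rw; case: ifP => hr; last first.
    by apply: big1 => j _; rewrite mxE /Rw hr mulr0 mul0r.
  rewrite mulr_sumr [in RHS]big_mkcond /=; apply: eq_bigr => j _.
  by rewrite mxE /Rw hr /Kt; case: ifP => _; [ring|rewrite mulr0 mul0r].
rewrite hA hB /Rw; case: ifP => _; ring.
Qed.

Definition Cm n (u : {perm 'I_n}) beta : 'M[int]_(size (Jset n u beta)) :=
  \matrix_(i, j) Cbridge n u beta (jn u beta i) (jn u beta j).

Definition Em n (u : {perm 'I_n}) beta : 'M[int]_(size (Jset n u beta)) :=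
  Cm u beta *m Qm u beta *m (Cm u beta)^T.

Lemma exchange_mx n (u : {perm 'I_n}) beta (i j : 'I_(size (Jset n u beta))) :
  wf_word n beta ->
  exchange n u beta (jn u beta i) (jn u beta j) = - Em u beta i j.
Proof.
move=> wf; rewrite /exchange pairing_formula //; congr (- _).
rewrite /Em mxE exchange_big /=; apply: eq_bigr => b _.
rewrite !mxE mulr_suml; apply: eq_bigr => a _; rewrite !mxE.
by rewrite mulrC mulrA.
Qed.

Lemma Qm_fact n (u : {perm 'I_n}) beta :
  Qm u beta = (1%:M + Bm' u beta) *m (1%:M + Am' u beta).
Proof.
have h0 : Bm' u beta *m Am' u beta = 0.
  apply/matrixP => i j; rewrite !mxE; apply: big1 => l _; rewrite !mxE.
  by case: (Rw u beta l); rewrite ?mulr0 ?mul0r.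
by rewrite mulmxDl !mulmxDr !mul1mx mulmx1 h0 addr0 /Qm.
Qed.

Lemma det_unitri k (A : 'M[int]_k) :
  is_trig_mx A -> (forall i, A i i = 1) -> \det A = 1.
Proof. by move=> ht hd; rewrite det_trig // big1. Qed.

Lemma Em_unit n (u : {perm 'I_n}) beta : Em u beta \in unitmx.
Proof.
have dC : \det (Cm u beta) = 1.
  apply: det_unitri.
    apply/is_trig_mxP => i j hij; rewrite mxE /Cbridge.
    have hl : (jn u beta i < jn u beta j)%N by rewrite /jn J_nth_lt.
    have cJ : jn u beta i \in Jset n u beta by rewrite /jn mem_nth.
    have /andP[c1 _] := J_mem cJ.
    by rewrite (gtn_eqF hl) disk_dels0 // ltnW.
  move=> i; rewrite mxE /Cbridge eqxx disk_dels0 //.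
  have cJ : jn u beta i \in Jset n u beta by rewrite /jn mem_nth.
  by have /andP[c1 _] := J_mem cJ.
have dB : \det (1%:M + Bm' u beta) = 1.
  apply: det_unitri.
    apply/is_trig_mxP => i j hij; rewrite !mxE /Kt.
    have ne : (i == j) = false by apply/eqP => e; move: hij; rewrite e ltnn.
    by rewrite ne ltnNge (ltnW hij) /=; case: ifP.
  by move=> i; rewrite !mxE eqxx /Kt ltnn; case: ifP.
have dA : \det (1%:M + Am' u beta) = 1.
  rewrite -det_tr; apply: det_unitri.
    apply/is_trig_mxP => i j hij; rewrite !mxE /Kt.
    have ne : (j == i) = false by apply/eqP => e; move: hij; rewrite e ltnn.
    by rewrite ne ltnNge (ltnW hij) /=; case: ifP.
  by move=> i; rewrite !mxE eqxx /Kt ltnn; case: ifP.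
by rewrite unitmxE /Em Qm_fact !det_mulmx det_tr dC dB dA !mulr1 unitr1.
Qed.

Unset Implicit Arguments.

Theorem theorem5p9 (n : nat) (u : {perm 'I_n}) (beta : seq int) :
  (2 <= n)%N -> wf_word n beta -> below_word n u beta ->
  forall v : nat -> int, exists lam : nat -> int,
    forall d : nat, d \in mutable_vertices n u beta ->
      (\sum_(c <- Jset n u beta) lam c * exchange n u beta c d)%R = v d.
Proof.
move=> _ wf _ v.
set k := size (Jset n u beta).
pose vr : 'rV[int]_k := \row_j v (jn u beta j).
pose lr := vr *m invmx (Em u beta).
exists (fun c => - \sum_(i < k | jn u beta i == c) lr 0 i).
move=> d hd.
have dJ : d \in Jset n u beta by move: hd; rewrite mem_filter => /andP[].
have hb : (index d (Jset n u beta) < k)%N by rewrite index_mem.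
pose b : 'I_k := Ordinal hb.
have db : d = jn u beta b by rewrite /jn /= nth_index.
rewrite (big_J u beta predT) /=.
have inner : forall a : 'I_k, \sum_(i < k | jn u beta i == jn u beta a) lr 0 i = lr 0 a.
  move=> a; rewrite (eq_bigl (pred1 a)) ?big_pred1_eq // => i /=.
  by rewrite /jn nth_uniq ?J_uniq.
rewrite (eq_bigr (fun a : 'I_k => lr 0 a * Em u beta a b)); last first.
  by move=> a _; rewrite inner db exchange_mx // mulrNN.
have -> : \sum_(a < k) lr 0 a * Em u beta a b = (lr *m Em u beta) 0 b by rewrite mxE.
by rewrite /lr mulmxKV ?Em_unit // mxE db.
Qed.
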